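(* Let $k\ge2$ and $\alpha_2,\alpha_3$ be positive integers with $\alpha_2,\alpha_3$ coprime. The Koras-Russell threefold of the first kind $X=\{x+x^ky+z^{\alpha_2}+t^{\alpha_3}=0\}\subset\mathbb{A}^4=\mathrm{Spec}(\mathbb{C}[x,y,z,t])$, endowed with the hyperbolic $\mathbb{G}_m$-action induced by $\lambda\cdot(x,y,z,t)=(\lambda^{\alpha_2\alpha_3}x,\lambda^{-(k-1)\alpha_2\alpha_3}y,\lambda^{\alpha_3}z,\lambda^{\alpha_2}t)$, is $\mathbb{G}_m$-linearly uniformly rational.
   Context: A $\mathbb{G}_m$-variety $X$ is $\mathbb{G}_m$-linearly rational at $x\in X$ if there exist a $\mathbb{G}_m$-stable open neighborhood $U_x$ of $x$, a linear $\mathbb{G}_m$-representation $V\simeq\mathbb{A}^n$ and a $\mathbb{G}_m$-stable open subset $U'\subset V$ with $U_x$ equivariantly isomorphic to $U'$; $X$ is $\mathbb{G}_m$-linearly uniformly rational if this holds at every point of $X$. *)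

(* Defs.v *)
From mathcomp Require Import all_boot all_algebra.
From mathcomp Require Import Rstruct complex.
From Stdlib Require Import Reals.

Set Implicit Arguments.
Unset Strict Implicit.
Unset Printing Implicit Defensive.

Import GRing.Theory.
Local Open Scope ring_scope.

Definition C : closedFieldType := complex R.

Definition pt (n : nat) := 'I_n -> C.
Definition subset_of (n : nat) := pt n -> Prop.

Inductive polyfun (n : nat) : (pt n -> C) -> Prop :=
  | pf_const (c : C) : polyfun (fun _ => c)
  | pf_coord (i : 'I_n) : polyfun (fun p => p i)
  | pf_add f g : polyfun f -> polyfun g -> polyfun (fun p => f p + g p)
  | pf_mul f g : polyfun f -> polyfun g -> polyfun (fun p => f p * g p)
  | pf_ext f g : polyfun f -> (forall p, f p = g p) -> polyfun g.

Definition zclosed (n : nat) (Z : subset_of n) : Prop :=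
  exists S : (pt n -> C) -> Prop,
    (forall f, S f -> polyfun f) /\
    (forall p, Z p <-> (forall f, S f -> f p = 0)).

Definition open_in (n : nat) (Y U : subset_of n) : Prop :=
  exists Z : subset_of n, zclosed Z /\ (forall p, U p <-> (Y p /\ ~ Z p)).

Definition regular_fun (n : nat) (U : subset_of n) (h : pt n -> C) : Prop :=
  forall p, U p -> exists W : subset_of n,
    open_in U W /\ W p /\
    exists f g : pt n -> C, polyfun f /\ polyfun g /\
      (forall q, W q -> g q != 0 /\ h q = f q / g q).

Definition regular_map (n m : nat) (U : subset_of n) (U' : subset_of m)
    (phi : pt n -> pt m) : Prop :=
  (forall p, U p -> U' (phi p)) /\ (forall j, regular_fun U (fun p => phi p j)).

(* A G_m = C^* action on (a subset of) A^n, given as a map C -> pt n -> pt n,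
   only the values at lambda != 0 matter. *)
Definition gm_act (n : nat) := C -> pt n -> pt n.

Definition gm_stable (n : nat) (U : subset_of n) (a : gm_act n) : Prop :=
  forall (l : C) p, l != 0 -> U p -> U (a l p).

Definition gm_equiv_iso (n m : nat) (U : subset_of n) (a : gm_act n)
    (U' : subset_of m) (b : gm_act m) : Prop :=
  exists (phi : pt n -> pt m) (psi : pt m -> pt n),
    regular_map U U' phi /\ regular_map U' U psi /\
    (forall p, U p -> forall i, psi (phi p) i = p i) /\
    (forall q, U' q -> forall j, phi (psi q) j = q j) /\
    (forall (l : C) p, l != 0 -> U p -> forall j, phi (a l p) j = b l (phi p) j).

Definition laurent (h : C -> C) : Prop :=
  exists (N M : nat) (c : 'I_N -> C),
    forall l : C, l != 0 -> h l = (\sum_(k < N) c k * l ^+ k) / l ^+ M.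

Definition linear_rep (n : nat) (rho : C -> 'M[C]_n) : Prop :=
  (forall i j, laurent (fun l => rho l i j)) /\
  rho 1 = 1%:M /\
  (forall l m : C, l != 0 -> m != 0 -> rho (l * m) = rho l *m rho m).

Definition rep_act (n : nat) (rho : C -> 'M[C]_n) : gm_act n :=
  fun l v i => \sum_(j < n) rho l i j * v j.

Definition whole (n : nat) : subset_of n := fun _ => True.

Definition gm_linearly_rational_at (N : nat) (X : subset_of N) (a : gm_act N)
    (x : pt N) : Prop :=
  exists Ux : subset_of N,
    open_in X Ux /\ gm_stable Ux a /\ Ux x /\
    exists (n : nat) (rho : C -> 'M[C]_n) (U' : subset_of n),
      linear_rep rho /\ open_in (@whole n) U' /\ gm_stable U' (rep_act rho) /\
      gm_equiv_iso Ux a U' (rep_act rho).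

Definition gm_linearly_uniformly_rational (N : nat) (X : subset_of N)
    (a : gm_act N) : Prop :=
  forall x, X x -> gm_linearly_rational_at X a x.

Definition cx : 'I_4 := @Ordinal 4 0 isT.
Definition cy : 'I_4 := @Ordinal 4 1 isT.
Definition cz : 'I_4 := @Ordinal 4 2 isT.
Definition ct : 'I_4 := @Ordinal 4 3 isT.

Definition mkpt4 (x y z t : C) : pt 4 :=
  fun i => match val i with 0 => x | 1 => y | 2 => z | _ => t end.

Definition KR (k a2 a3 : nat) : subset_of 4 :=
  fun p => p cx + p cx ^+ k * p cy + p cz ^+ a2 + p ct ^+ a3 = 0.

Definition KR_act (k a2 a3 : nat) : gm_act 4 :=
  fun l p => mkpt4 (l ^+ (a2 * a3) * p cx)
                   ((l ^+ ((k - 1) * a2 * a3))^-1 * p cy)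
                   (l ^+ a3 * p cz)
                   (l ^+ a2 * p ct).

(* Main.v *)
Require Import Defs.
From mathcomp Require Import all_boot all_algebra.
From mathcomp Require Import Rstruct complex.
From mathcomp Require Import ring.
Set Implicit Arguments.
Unset Strict Implicit.
Unset Printing Implicit Defensive.
Import GRing.Theory.
Local Open Scope ring_scope.

Lemma pf_opp n (f : pt n -> C) : polyfun f -> polyfun (fun p => - f p).
Proof.
move=> H; apply: (@pf_ext _ (fun p => (-1) * f p)); first by apply: pf_mul => //; apply: pf_const.
by move=> p; rewrite mulN1r.
Qed.

Lemma pf_exp n (f : pt n -> C) m : polyfun f -> polyfun (fun p => f p ^+ m).
Proof.
move=> H; elim: m => [|m IH].
  by apply: (@pf_ext _ (fun _ => 1)); [apply: pf_const | move=> p; rewrite expr0].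
apply: (@pf_ext _ (fun p => f p * f p ^+ m)); first by apply: pf_mul.
by move=> p; rewrite exprS.
Qed.

Ltac pf := repeat first [ apply: pf_add | apply: pf_mul | apply: pf_exp
   | apply: pf_opp | apply: pf_coord | apply: pf_const ].

Lemma zclosed0 n (f : pt n -> C) : polyfun f -> zclosed (fun p => f p = 0).
Proof.
move=> H; exists (fun g => g = f); split; first by move=> g ->.
by move=> p; split => [Hp g -> //| Hg]; apply: Hg.
Qed.

Lemma open_nz n (Y : subset_of n) (f : pt n -> C) :
  polyfun f -> open_in Y (fun p => Y p /\ f p != 0).
Proof.
move=> H; exists (fun p => f p = 0); split; first exact: zclosed0.
by move=> p; split => -[a b]; split => //; apply/eqP.
Qed.

Lemma open_self n (U : subset_of n) : open_in U U.
Proof.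
exists (fun p => (fun _ => (1 : C)) p = 0); split; first by apply: zclosed0; pf.
by move=> p; split => [H|[]//]; split => //; apply/eqP; rewrite oner_eq0.
Qed.

Lemma reg_frac n (U : subset_of n) (h f g : pt n -> C) :
  polyfun f -> polyfun g -> (forall q, U q -> g q != 0 /\ h q = f q / g q) ->
  regular_fun U h.
Proof.
move=> Hf Hg H p Up; exists U; split; first exact: open_self.
by split => //; exists f, g.
Qed.

Lemma reg_poly n (U : subset_of n) (h : pt n -> C) : polyfun h -> regular_fun U h.
Proof.
move=> Hh; apply: (@reg_frac _ _ _ h (fun _ => 1)) => //; first by pf.
by move=> q _; rewrite oner_eq0 divr1.
Qed.

Definition o0 : 'I_3 := @Ordinal 3 0 isT.
Definition o1 : 'I_3 := @Ordinal 3 1 isT.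
Definition o2 : 'I_3 := @Ordinal 3 2 isT.

Lemma ord3P (P : 'I_3 -> Prop) : P o0 -> P o1 -> P o2 -> forall i, P i.
Proof.
move=> H0 H1 H2 [[|[|[|m]]] Hm] //.
- by have -> : Ordinal Hm = o0 by apply: val_inj.
- by have -> : Ordinal Hm = o1 by apply: val_inj.
- by have -> : Ordinal Hm = o2 by apply: val_inj.
Qed.

Lemma ord4P (P : 'I_4 -> Prop) : P cx -> P cy -> P cz -> P ct -> forall i, P i.
Proof.
move=> H0 H1 H2 H3 [[|[|[|[|m]]]] Hm] //.
- by have -> : Ordinal Hm = cx by apply: val_inj.
- by have -> : Ordinal Hm = cy by apply: val_inj.
- by have -> : Ordinal Hm = cz by apply: val_inj.
- by have -> : Ordinal Hm = ct by apply: val_inj.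
Qed.

Definition dsel (d0 d1 d2 : C -> C) (i : 'I_3) : C -> C :=
  match val i with 0 => d0 | 1 => d1 | _ => d2 end.

Definition drep (d0 d1 d2 : C -> C) : C -> 'M[C]_3 :=
  fun l => \matrix_(i, j) ((i == j)%:R * dsel d0 d1 d2 i l).

Lemma drep_act d0 d1 d2 l v i :
  rep_act (drep d0 d1 d2) l v i = dsel d0 d1 d2 i l * v i.
Proof.
rewrite /rep_act (bigD1 i) //= big1 ?addr0 => [|j Hj]; rewrite !mxE ?eqxx ?mul1r //.
by rewrite eq_sym (negbTE Hj) mul0r mul0r.
Qed.

Definition good (d : C -> C) :=
  laurent d /\ d 1 = 1 /\ (forall l m, l != 0 -> m != 0 -> d (l * m) = d l * d m).

Lemma laurent_b (b : bool) h : laurent h -> laurent (fun l => b%:R * h l).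
Proof.
case: b => [[N [M [c Hc]]]|_].
  by exists N, M, c => l Hl; rewrite mul1r Hc.
exists 0%N, 0%N, (fun _ => 0) => l _; rewrite big_ord0 mul0r mul0r //.
Qed.

Lemma laurent_ext h g : (forall l, h l = g l) -> laurent h -> laurent g.
Proof. by move=> E [N [M [c Hc]]]; exists N, M, c => l Hl; rewrite -E Hc. Qed.

Lemma drep_lin d0 d1 d2 : good d0 -> good d1 -> good d2 ->
  linear_rep (drep d0 d1 d2).
Proof.
move=> G0 G1 G2.
have G : forall i, good (dsel d0 d1 d2 i) by apply: ord3P.
split; [|split].
- move=> i j; apply: (@laurent_ext (fun l => (i == j)%:R * dsel d0 d1 d2 i l)).
    by move=> l; rewrite mxE.
  by apply: laurent_b; case: (G i).
- apply/matrixP => i j; rewrite !mxE; case: (G i) => _ [-> _].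
  by case: (i == j); rewrite ?mulr1.
- move=> l m Hl Hm; apply/matrixP => i j; rewrite !mxE.
  rewrite (bigD1 i) //= big1 ?addr0 => [|k Hk]; rewrite !mxE ?eqxx ?mul1r.
    case: (G i) => _ [_ ->] //.
    by case: (i == j); rewrite ?mul1r ?mul0r ?mulr0.
  by rewrite eq_sym (negbTE Hk) mul0r mul0r.
Qed.

Lemma good_pow e : good (fun l => l ^+ e).
Proof.
split; [|split]; last by move=> l m _ _; rewrite exprMn.
- exists e.+1, 0%N, (fun k : 'I_e.+1 => (val k == e)%:R) => l _.
  rewrite expr0 divr1 big_ord_recr /= eqxx mul1r big1 ?add0r // => k _.
  by rewrite /= (ltn_eqF (ltn_ord k)) mul0r.
- by rewrite expr1n.
Qed.

Lemma good_ipow e : good (fun l => (l ^+ e)^-1).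
Proof.
split; [|split]; last by move=> l m _ _; rewrite exprMn invfM.
- exists 1%N, e, (fun _ => 1) => l _.
  by rewrite big_ord1 expr0 mulr1 div1r.
- by rewrite expr1n invr1.
Qed.

Lemma nat_e k' a2 a3 : (k' * a2 * a3 = a2 * a3 * k')%N.
Proof. by rewrite [RHS]mulnC mulnA. Qed.

Lemma KR_stab k' a2 a3 l p : l != 0 -> KR k'.+1 a2 a3 p ->
  KR k'.+1 a2 a3 (KR_act k'.+1 a2 a3 l p).
Proof.
move=> Hl; rewrite /KR /KR_act /mkpt4 /= subSS subn0 !exprMn -!exprM [(a3 * a2)%N]mulnC.
rewrite (nat_e k' a2 a3) (exprM _ (a2 * a3) k') (exprM _ (a2 * a3) k'.+1).
have HL : l ^+ (a2 * a3) != 0 by rewrite expf_neq0.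
move: (l ^+ (a2 * a3)) HL => L HL H.
transitivity (L * (p cx + p cx ^+ k'.+1 * p cy + p cz ^+ a2 + p ct ^+ a3)).
  rewrite exprS; move: (L ^+ k') (expf_neq0 k' HL) => M HM; field.
  by [].
by rewrite H mulr0.
Qed.

Definition iA (j : 'I_3) : 'I_4 := match val j with 0 => cx | 1 => cz | _ => ct end.
Definition phiA (p : pt 4) : pt 3 := fun j => p (iA j).
Definition psiA k a2 a3 (q : pt 3) : pt 4 :=
  mkpt4 (q o0) (- (q o0 + q o1 ^+ a2 + q o2 ^+ a3) / q o0 ^+ k) (q o1) (q o2).

Lemma chartA k' a2 a3 x0 : KR k'.+1 a2 a3 x0 -> x0 cx != 0 ->
  gm_linearly_rational_at (KR k'.+1 a2 a3) (KR_act k'.+1 a2 a3) x0.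
Proof.
move=> HX Hx.
exists (fun p => KR k'.+1 a2 a3 p /\ p cx != 0); split.
  by apply: open_nz; pf.
split.
  move=> l p Hl [HK Hp]; split; first exact: KR_stab.
  by rewrite /KR_act /mkpt4 /= mulf_neq0 // expf_neq0.
split; first by [].
exists 3%N, (drep (fun l => l ^+ (a2 * a3)) (fun l => l ^+ a3) (fun l => l ^+ a2)),
  (fun q => whole q /\ q o0 != 0).
split; first by apply: drep_lin; apply: good_pow.
split; first by apply: open_nz; pf.
split.
  move=> l q Hl [_ Hq]; split => //; rewrite drep_act /=.
  by rewrite mulf_neq0 // expf_neq0.
exists phiA, (psiA k'.+1 a2 a3).
split.
  split; first by move=> p [_ Hp].
  move=> j; apply: reg_poly; move: j; apply: ord3P; apply: pf_coord.
split.
  split.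
    move=> q [_ Hq]; split => //.
    rewrite /KR /psiA /mkpt4 /=; field; by rewrite expf_neq0.
  apply: ord4P; rewrite /psiA /mkpt4 /=; try (apply: reg_poly; pf; fail).
  apply: (@reg_frac _ _ _ (fun q => - (q o0 + q o1 ^+ a2 + q o2 ^+ a3)) (fun q => q o0 ^+ k'.+1)); try pf.
  by move=> q [_ Hq]; rewrite expf_neq0.
split.
  move=> p [HK Hp]; apply: ord4P => //.
  rewrite /psiA /phiA /mkpt4 /=.
  have -> : p cx + p cz ^+ a2 + p ct ^+ a3 = - (p cx ^+ k'.+1 * p cy).
    apply/eqP; rewrite -subr_eq0; apply/eqP; rewrite -HK /KR; ring.
  by field; rewrite expf_neq0.
split.
  by move=> q _; apply: ord3P.
move=> l p Hl _; apply: ord3P; rewrite drep_act //.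
Qed.

Definition uu k' (p : pt 4) : C := 1 + p cx ^+ k' * p cy.

Lemma uu_act k' a2 a3 l p : l != 0 -> uu k' (KR_act k'.+1 a2 a3 l p) = uu k' p.
Proof.
move=> Hl; rewrite /uu /KR_act /mkpt4 /= subSS subn0 exprMn.
rewrite (nat_e k' a2 a3) (exprM _ (a2 * a3) k').
have HL : (l ^+ (a2 * a3)) ^+ k' != 0 by rewrite !expf_neq0.
move: ((l ^+ (a2 * a3)) ^+ k') HL => M HM; field; done.
Qed.

Definition cB a2 a3 (q : pt 3) : C := q o1 ^+ a2 + q o2 ^+ a3.
Definition wB k' a2 a3 (q : pt 3) : C := 1 + (- cB a2 a3 q) ^+ k' * q o0.
Definition phiB k' (p : pt 4) : pt 3 := fun j =>
  match val j with 0 => p cy / uu k' p ^+ k' | 1 => p cz | _ => p ct end.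
Definition psiB k' a2 a3 (q : pt 3) : pt 4 :=
  mkpt4 (- cB a2 a3 q / wB k' a2 a3 q) (q o0 * wB k' a2 a3 q ^+ k') (q o1) (q o2).

Lemma KR_c k' a2 a3 p : KR k'.+1 a2 a3 p ->
  p cz ^+ a2 + p ct ^+ a3 = - (p cx * uu k' p).
Proof.
move=> HK; apply/eqP; rewrite -subr_eq0; apply/eqP; rewrite -HK /KR /uu exprS; ring.
Qed.

Lemma KR_iff k' a2 a3 p : KR k'.+1 a2 a3 p <->
  p cx * uu k' p + (p cz ^+ a2 + p ct ^+ a3) = 0.
Proof.
rewrite /KR /uu (_ : p cx * (1 + p cx ^+ k' * p cy) + (p cz ^+ a2 + p ct ^+ a3) =
  p cx + p cx ^+ k'.+1 * p cy + p cz ^+ a2 + p ct ^+ a3) //.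
rewrite exprS; ring.
Qed.

Lemma wB_phi k' a2 a3 p : KR k'.+1 a2 a3 p -> uu k' p != 0 ->
  wB k' a2 a3 (phiB k' p) = uu k' p.
Proof.
move=> HK Hp.
rewrite /wB /cB /phiB /= (KR_c HK) opprK exprMn.
have HM : uu k' p ^+ k' != 0 by rewrite expf_neq0.
by rewrite -mulrA (mulrC (uu k' p ^+ k')) divfK.
Qed.

Lemma Hu_lem k' a2 a3 q : wB k' a2 a3 q != 0 ->
  uu k' (psiB k' a2 a3 q) = wB k' a2 a3 q.
Proof.
move=> Hq; rewrite /uu /psiB /mkpt4 /= expr_div_n.
have HM : wB k' a2 a3 q ^+ k' != 0 by rewrite expf_neq0.
move: (wB k' a2 a3 q ^+ k') HM => M HM; rewrite /wB /cB; field; done.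
Qed.

Lemma chartB k' a2 a3 x0 : KR k'.+1 a2 a3 x0 -> uu k' x0 != 0 ->
  gm_linearly_rational_at (KR k'.+1 a2 a3) (KR_act k'.+1 a2 a3) x0.
Proof.
move=> HX Hx.
exists (fun p => KR k'.+1 a2 a3 p /\ uu k' p != 0); split.
  by apply: open_nz; rewrite /uu; pf.
split.
  move=> l p Hl [HK Hp]; split; first exact: KR_stab.
  by rewrite uu_act.
split; first by [].
exists 3%N, (drep (fun l => (l ^+ (k' * a2 * a3))^-1) (fun l => l ^+ a3) (fun l => l ^+ a2)),
  (fun q => whole q /\ wB k' a2 a3 q != 0).
split; first by apply: drep_lin; (apply: good_pow || apply: good_ipow).
split; first by apply: open_nz; rewrite /wB /cB; pf.
split.
  move=> l q Hl [_ Hq]; split => //; move: Hq.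
  rewrite /wB /cB !drep_act /dsel /= !exprMn -!exprM [(a3 * a2)%N]mulnC.
  rewrite (nat_e k' a2 a3) (exprM _ (a2 * a3) k').
  have HL : l ^+ (a2 * a3) != 0 by rewrite !expf_neq0.
  move: (l ^+ (a2 * a3)) HL => L HL.
  have -> : (- (L * q o1 ^+ a2 + L * q o2 ^+ a3)) ^+ k' = L ^+ k' * (- (q o1 ^+ a2 + q o2 ^+ a3)) ^+ k'.
    rewrite -exprMn; congr (_ ^+ _); ring.
  by rewrite -mulrA (mulrCA (_ ^+ k')) mulrA -mulrA mulVKf // expf_neq0.
exists (phiB k'), (psiB k' a2 a3).
split.
  split.
    by move=> p [HK Hp]; split => //; rewrite wB_phi.
  apply: ord3P; rewrite /phiB /=; try (apply: reg_poly; pf; fail).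
  apply: (@reg_frac _ _ _ (fun p => p cy) (fun p => uu k' p ^+ k')); rewrite /uu; try pf.
  by move=> p [_ Hp]; rewrite expf_neq0.
split.
  split.
    move=> q [_ Hq].
    split; last by rewrite Hu_lem.
    apply/KR_iff; rewrite Hu_lem // /psiB /mkpt4 /= divfK // /cB; ring.
  apply: ord4P; rewrite /psiB /mkpt4 /=; try (apply: reg_poly; rewrite /wB /cB; pf; fail).
  apply: (@reg_frac _ _ _ (fun q => - cB a2 a3 q) (fun q => wB k' a2 a3 q)); rewrite /wB /cB; try pf.
  by move=> q [_ Hq].
split.
  move=> p [HK Hp]; apply: ord4P => //.
    rewrite /psiB /mkpt4 /= wB_phi // /cB /= (KR_c HK) opprK mulfK //.
  by rewrite /psiB /mkpt4 /= wB_phi // divfK // expf_neq0.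
split.
  move=> q [_ Hq]; apply: ord3P => //.
  by rewrite /phiB /= Hu_lem // mulfK // expf_neq0.
move=> l p Hl _; apply: ord3P; rewrite drep_act //.
rewrite /phiB /dsel /= uu_act // /KR_act /mkpt4 /= subSS subn0 mulrA //.
Qed.

Theorem theorem3p6 (k a2 a3 : nat) :
  (2 <= k)%N -> (0 < a2)%N -> (0 < a3)%N -> coprime a2 a3 ->
  gm_linearly_uniformly_rational (KR k a2 a3) (KR_act k a2 a3).
Proof.
case: k => [//|k'] Hk _ _ _ x0 HX.
have [Hx|Hx] := eqVneq (x0 cx) 0.
  apply: chartB => //.
  rewrite /uu Hx expr0n; case: k' Hk {HX} => [//|k'] _ /=.
  by rewrite mul0r addr0 oner_eq0.
exact: chartA.
Qed.
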